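(* Let $A$ be a threshold graph with $|V(A)|>1$. Then a vertex $t\in V(A)$ is $A$-terminal if and only if $t$ is not $\overline{A}$-terminal. Consequently every two $A$-terminal vertices are nonadjacent, and every two $A$-non-terminal vertices are adjacent.
   Context: A threshold graph is a graph with no induced four-vertex path, four-vertex cycle, or complement of a four-vertex cycle. $\overline{A}$ is the complement graph. In a graph $H$, a vertex $u$ $H$-dominates a vertex $v\ne u$ if $u,v$ are adjacent and every neighbour of $v$ is equal or adjacent to $u$. A vertex $t$ is $H$-non-terminal if there exists $s\in V(H)\setminus\{t\}$ such that $t$ $H$-dominates $s$, and $H$-terminal otherwise. *)

(* Defs.v *)
From mathcomp Require Import all_boot.
Set Implicit Arguments. Unset Strict Implicit. Unset Printing Implicit Defensive.

Definition simple_graph (T : finType) (e : rel T) : Prop :=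
  symmetric e /\ irreflexive e.

Definition complement (T : finType) (e : rel T) : rel T :=
  fun x y => (x != y) && ~~ e x y.

Definition distinct4 (T : finType) (a b c d : T) : bool :=
  [&& a != b, a != c, a != d, b != c, b != d & c != d].

Definition induced_P4 (T : finType) (e : rel T) (a b c d : T) : bool :=
  [&& distinct4 a b c d, e a b, e b c, e c d, ~~ e a c, ~~ e b d & ~~ e a d].

Definition induced_C4 (T : finType) (e : rel T) (a b c d : T) : bool :=
  [&& distinct4 a b c d, e a b, e b c, e c d, e d a, ~~ e a c & ~~ e b d].

Definition induced_2K2 (T : finType) (e : rel T) (a b c d : T) : bool :=
  [&& distinct4 a b c d, e a b, e c d, ~~ e a c, ~~ e a d, ~~ e b c & ~~ e b d].

Definition threshold (T : finType) (e : rel T) : Prop :=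
  forall a b c d : T,
    ~~ induced_P4 e a b c d /\ ~~ induced_C4 e a b c d /\ ~~ induced_2K2 e a b c d.

Definition dominates (T : finType) (e : rel T) (u v : T) : Prop :=
  u != v /\ e u v /\ forall w : T, e v w -> w = u \/ e u w.

Definition non_terminal (T : finType) (e : rel T) (t : T) : Prop :=
  exists s : T, s != t /\ dominates e t s.

Definition terminal (T : finType) (e : rel T) (t : T) : Prop :=
  ~ non_terminal e t.

(* Main.v *)
Require Import Defs.
From mathcomp Require Import all_boot.
From Stdlib Require Import Classical.

Ltac atom Hs := first [ done | by rewrite Hs | by rewrite eq_sym ].
Ltac splitall Hs := repeat (apply/andP; split); atom Hs.

Lemma vicinal (T : finType) (e : rel T) :
  simple_graph e -> threshold e -> forall u v : T, u != v ->
  (forall w, w != u -> e v w -> e u w) \/ (forall w, w != v -> e u w -> e v w).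
Proof.
move=> [Hs Hi] Hth u v Huv.
apply: NNPP => Hn.
have [H1 H2] := not_or_and _ _ Hn.
have [a Ha] := not_all_ex_not _ _ H1.
have [b Hb] := not_all_ex_not _ _ H2.
have [Hau [Hva Hua]] : a != u /\ e v a /\ ~~ e u a.
  by apply: NNPP => K; apply: Ha => ?? ; apply: NNPP => K2; apply: K; split=>//; split=>//; apply/negP.
have [Hbv [Hub Hvb]] : b != v /\ e u b /\ ~~ e v b.
  by apply: NNPP => K; apply: Hb => ?? ; apply: NNPP => K2; apply: K; split=>//; split=>//; apply/negP.
have Hav : a != v by apply/eqP => E; subst; rewrite Hi in Hva.
have Hbu : b != u by apply/eqP => E; subst; rewrite Hi in Hub.
have Hab : a != b by apply/eqP => E; subst; rewrite Hva in Hvb.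
have [Hp [Hc Hk]] := Hth u v a b.
have [Hp1 _] := Hth a v u b.
have [Hp2 _] := Hth v a b u.
have [_ [_ Hk3]] := Hth v a u b.
case: (boolP (e u v)) => Euv; case: (boolP (e a b)) => Eab.
- move/negP: Hc; apply; rewrite /induced_C4 /distinct4; splitall Hs.
- move/negP: Hp1; apply; rewrite /induced_P4 /distinct4; splitall Hs.
- move/negP: Hp2; apply; rewrite /induced_P4 /distinct4; splitall Hs.
- move/negP: Hk3; apply; rewrite /induced_2K2 /distinct4; splitall Hs.
Qed.

Lemma not_both (T : finType) (e : rel T) (t : T) :
  simple_graph e -> non_terminal e t -> non_terminal (complement e) t -> False.
Proof.
move=> [Hs Hi] [s1 [_ [_ [H1 H1d]]]] [s2 [Hs2 [_ [/andP [_ H2] H2d]]]].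
have Hts1 : t != s1 by apply/eqP => E; subst; rewrite Hi in H1.
case: (eqVneq s2 s1) => [E|Hne].
  by subst; rewrite H1 in H2.
case: (boolP (e s2 s1)) => E21.
  rewrite Hs in E21.
  case: (H1d _ E21) => [E|].
    by rewrite E eqxx in Hs2.
  by move=> K; rewrite K in H2.
case: (H2d s1); first by rewrite /complement Hne E21.
  by move=> E; rewrite E eqxx in Hts1.
by rewrite /complement H1 andbF.
Qed.

Lemma card_lt (T : finType) (e : rel T) (s y u : T) :
  simple_graph e -> (forall w, w != s -> e y w -> e s w) ->
  u != y -> e s u -> ~~ e y u ->
  #|[set w | e y w]| < #|[set w | e s w]|.
Proof.
move=> [Hs Hi] Hsub Huy Hsu Hyu.
have P : [set w | e y w] :\ s \proper [set w | e s w] :\ y.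
  apply/properP; split.
    apply/subsetP => w; rewrite !inE => /andP [Hws Hyw].
    rewrite Hsub //; rewrite andbT; apply/eqP => E; subst; by rewrite Hi in Hyw.
  exists u; first by rewrite !inE Huy Hsu.
  by rewrite !inE (negbTE Hyu) andbF.
have C := proper_card P.
rewrite (cardsD1 s [set w | e y w]) (cardsD1 y [set w | e s w]) !inE Hs.
by rewrite ltn_add2l.
Qed.

Lemma one_of (T : finType) (e : rel T) (t : T) :
  simple_graph e -> threshold e -> 1 < #|T| ->
  terminal e t -> terminal (complement e) t -> False.
Proof.
move=> G Hth HT Ht Hc.
have [Hs Hi] := G.
have Ha : forall s, e t s -> exists w, [/\ e s w, w != t & ~~ e t w].
  move=> s Hts; apply: NNPP => K; apply: Ht; exists s; split.
    by apply/eqP => E; subst; rewrite Hi in Hts.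
  split; first by apply/eqP => E; subst; rewrite Hi in Hts.
  split=> // w Hsw; apply: NNPP => K2; apply: K; exists w; split=>//.
    by apply/eqP => E; subst; apply: K2; left.
  by apply/negP => K3; apply: K2; right.
have Hb : forall u, u != t -> ~~ e t u -> exists y, [/\ u != y, ~~ e u y, y != t & e t y].
  move=> u Hut Htu; apply: NNPP => K; apply: Hc; exists u; split=>//.
  split; first by rewrite eq_sym.
  split; first by rewrite /complement eq_sym Hut.
  move=> w /andP [Huw Hnuw]; apply: NNPP => K2.
  have Hwt : w != t by apply/eqP => E; apply: K2; left.
  have Htw : e t w.
    apply: negbNE; apply/negP => K3; apply: K2; right.
    by rewrite /complement K3 andbT eq_sym.
  by apply: K; exists w; split.
have [s0 Hs0] : exists s0, e t s0.
  have : #|[set~ t]| > 0 by rewrite cardsC1; case: #|T| HT.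
  case/card_gt0P => v; rewrite !inE => Hvt.
  case: (boolP (e t v)) => Htv; first by exists v.
  by have [y [_ _ _ Hy]] := Hb v Hvt Htv; exists y.
pose s := [arg min_(x < s0 | e t x) #|[set w | e x w]|].
have [smin Hts Hmin] : extremum_spec (T:=nat) leq (fun x => e t x) (fun x => #|[set w | e x w]|) s.
  by apply: arg_minnP.
have [u [Hsu Hut Htu]] := Ha _ Hts.
have [y [Huy Hnuy Hyt Hty]] := Hb _ Hut Htu.
have Hsy : smin != y by apply/eqP => E; rewrite -E Hs Hsu in Hnuy.
have Hyu : ~~ e y u by rewrite Hs.
case: (@vicinal _ _ G Hth _ _ Hsy) => Hv.
  have := Hmin _ Hty; rewrite leqNgt => /negP; apply.
  by apply: (@card_lt _ _ _ _ u G Hv) => //; rewrite eq_sym.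
by have := Hv u Huy Hsu; rewrite (negbTE Hyu).
Qed.

Lemma dom_nt (T : finType) (e : rel T) (a b : T) :
  a != b -> e a b -> (forall w, w != a -> e b w -> e a w) -> non_terminal e a.
Proof.
move=> Hab Heab H; exists b; split; first by rewrite eq_sym.
split=>//; split=>// w Hbw.
by case: (eqVneq w a) => [->|Hw]; [left | right; apply: H].
Qed.

Lemma comp_nt (T : finType) (e : rel T) (a b : T) :
  a != b -> ~~ e a b -> (forall w, w != b -> e a w -> e b w) -> non_terminal (complement e) a.
Proof.
move=> Hab Heab H; exists b; split; first by rewrite eq_sym.
split=>//; split; first by rewrite /complement Hab.
move=> w /andP [Hbw Hnbw].
case: (eqVneq w a) => [->|Hw]; [left=>// | right].
rewrite /complement eq_sym Hw /=; apply/negP => K.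
have Hwb : w != b by rewrite eq_sym.
by rewrite (H w Hwb K) in Hnbw.
Qed.

Theorem mainTheorem15 (T : finType) (e : rel T) :
  simple_graph e -> threshold e -> 1 < #|T| ->
  (forall t : T, terminal e t <-> ~ terminal (complement e) t) /\
  (forall s t : T, s != t -> terminal e s -> terminal e t -> ~~ e s t) /\
  (forall s t : T, s != t -> non_terminal e s -> non_terminal e t -> e s t).
Proof.
move=> G Hth HT.
have [Hs Hi] := G.
split.
  move=> t; split.
    by move=> H1 H2; apply: (@one_of _ _ t G Hth HT).
  by move=> H1 H2; apply: H1 => H3; apply: (@not_both _ _ t G).
split.
  move=> s t Hst Ts Tt; apply/negP => E.
  case: (@vicinal _ _ G Hth _ _ Hst) => Hv.
    by apply: Ts; apply: (@dom_nt _ _ s t).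
  by apply: Tt; apply: (@dom_nt _ _ t s) => //; [rewrite eq_sym | rewrite Hs].
move=> s t Hst Ns Nt; apply: negbNE; apply/negP => E.
case: (@vicinal _ _ G Hth _ _ Hst) => Hv.
  apply: (@not_both _ _ t G Nt); apply: (@comp_nt _ _ t s) => //.
    by rewrite eq_sym.
  by rewrite Hs.
by apply: (@not_both _ _ s G Ns); apply: (@comp_nt _ _ s t).
Qed.
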